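(* Let $4.999\le r\le 5$, $1\le\theta\le 2.2$, and $\delta\in\mathbb{R}$. Define $u_0=u_1=1$, $u_2=\theta+\delta$, and $u_n=(r-\theta)u_{n-1}-(r-2\theta)u_{n-2}-\theta u_{n-3}$ for $n\ge 3$. Let $q(x)=1-(r-\theta)x+(r-2\theta)x^2+\theta x^3$ with discriminant $D=-27\theta^2-4\theta^3+6\theta^2r+6\theta r^2+\theta^2r^2-4r^3-2\theta r^3+r^4$. Suppose $D<0$, so that $q$ has one real root $\alpha$ and two non-real complex conjugate roots $\beta,\gamma$, and suppose $|\alpha|>1>|\beta|=|\gamma|>0$. Then $u_N\ge u_{N+1}$ for some integer $N>0$. *)

(* Defs.v *)
From Stdlib Require Import Reals Lra Lia.
From Coquelicot Require Import Coquelicot.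
Open Scope R_scope.

Fixpoint useq (r theta delta : R) (n : nat) : R :=
  match n with
  | O => 1
  | S O => 1
  | S (S O) => theta + delta
  | S ((S (S m as m1)) as m2) =>
      (r - theta) * useq r theta delta m2
      - (r - 2 * theta) * useq r theta delta m1
      - theta * useq r theta delta m
  end.

Definition qC (r theta : R) (z : C) : C :=
  (RtoC 1 - RtoC (r - theta) * z + RtoC (r - 2 * theta) * (z * z)
   + RtoC theta * (z * z * z))%C.

Definition qR (r theta x : R) : R :=
  1 - (r - theta) * x + (r - 2 * theta) * x ^ 2 + theta * x ^ 3.

Definition discr (r theta : R) : R :=
  - 27 * theta ^ 2 - 4 * theta ^ 3 + 6 * theta ^ 2 * r + 6 * theta * r ^ 2
  + theta ^ 2 * r ^ 2 - 4 * r ^ 3 - 2 * theta * r ^ 3 + r ^ 4.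

(* Main.v *)
Require Import Defs.
From Stdlib Require Import Reals Lra Lia Psatz ZArith.
From Coquelicot Require Import Coquelicot.
Open Scope R_scope.

Lemma us r t d n : useq r t d (S (S (S n))) = (r-t)*useq r t d (S (S n)) - (r-2*t)*useq r t d (S n) - t * useq r t d n.
Proof. reflexivity. Qed.

Lemma no_pos2 (z : nat -> R) (s p : R) :
  4 * p - s * s > 0 ->
  (forall n, z n > 0) ->
  (forall n, z (S (S n)) = s * z (S n) - p * z n) -> False.
Proof.
  intros Hd Hz Hrec.
  set (dl := p - s*s/4).
  assert (Hdl : dl > 0) by (unfold dl; lra).
  set (t := fun n => z (S n) / z n).
  assert (Htp : forall n, t n > 0).
  { intro n; unfold t; apply Rdiv_lt_0_compat; apply Hz. }
  set (t0 := t O).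
  assert (Ht0 : t0 > 0) by apply Htp.
  assert (Hstep : forall n, t n <= t0 -> t (S n) <= t n - dl / t0).
  { intros n Hn. unfold t in *.
    pose proof (Hz n) as A. pose proof (Hz (S n)) as B.
    rewrite Hrec.
    set (a := z n) in *. set (b := z (S n)) in *.
    assert (Hq : b*b - s*a*b + p*a*a >= dl*a*a).
    { unfold dl. assert (0 <= (b - s*a/2)*(b - s*a/2)) by apply Rle_0_sqr.
      assert (E0 : b*b - s*a*b + p*a*a - (p - s*s/4)*a*a = (b - s*a/2)*(b - s*a/2)) by field. lra. }
    assert (E : (s * b - p * a) / b = b / a - (b*b - s*a*b + p*a*a)/(a*b)).
    { field. lra. }
    rewrite E.
    assert (dl / t0 <= (b*b - s*a*b + p*a*a)/(a*b)).
    { apply Rle_trans with (dl * a * a / (a*b)).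
      - replace (dl * a * a / (a*b)) with (dl / (b/a)) by (field; lra).
        unfold Rdiv. apply Rmult_le_compat_l. lra.
        apply Rinv_le_contravar. apply Rdiv_lt_0_compat; lra. exact Hn.
      - unfold Rdiv. apply Rmult_le_compat_r.
        left; apply Rinv_0_lt_compat; nra. lra. }
    lra. }
  assert (Hind : forall n, t n <= t0 - INR n * (dl / t0)).
  { induction n.
    - simpl. unfold t0. lra.
    - assert (0 <= INR n * (dl/t0)).
      { apply Rmult_le_pos. apply pos_INR. left; apply Rdiv_lt_0_compat; lra. }
      pose proof (Hstep n ltac:(lra)). rewrite S_INR. lra. }
  set (k := dl / t0).
  assert (Hk : k > 0) by (unfold k; apply Rdiv_lt_0_compat; lra).
  destruct (archimed (t0 / k)) as [Hup _].
  assert (Hz0 : (0 <= up (t0 / k))%Z).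
  { apply le_IZR. assert (t0 / k > 0) by (apply Rdiv_lt_0_compat; lra). lra. }
  set (N := Z.to_nat (up (t0/k))).
  assert (HN : INR N = IZR (up (t0/k))).
  { unfold N. rewrite INR_IZR_INZ. rewrite Z2Nat.id; auto. }
  pose proof (Hind N) as H1. pose proof (Htp N) as H2. fold k in H1.
  rewrite HN in H1.
  assert (IZR (up (t0/k)) * k > t0).
  { apply Rmult_lt_reg_r with (/k). apply Rinv_0_lt_compat; lra.
    rewrite Rmult_assoc, Rinv_r by lra. rewrite Rmult_1_r. exact Hup. }
  lra.
Qed.

Lemma q_pos_ge1 r t x : 4.999 <= r <= 5 -> 1 <= t <= 2.2 -> x >= 1 -> qR r t x > 0.
Proof.
  intros Hr Ht Hx. unfold qR.
  assert ((r - 2*t) * x^2 >= (r-2*t)*x).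
  { apply Rmult_ge_compat_l. lra. simpl. nra. }
  assert (t * x^3 - t*x >= 0).
  { replace (t*x^3 - t*x) with (t*x*(x*x-1)) by ring.
    assert (x*x - 1 >= 0) by nra.
    assert (t*x > 0) by nra. nra. }
  nra.
Qed.

Theorem mainTheorem13 (r theta delta : R)
  (Hr : 4.999 <= r <= 5) (Htheta : 1 <= theta <= 2.2)
  (HD : discr r theta < 0)
  (Hroots : exists (alpha : R) (beta : C),
      qR r theta alpha = 0 /\ qC r theta beta = RtoC 0 /\ Im beta <> 0 /\
      Rabs alpha > 1 /\ 1 > Cmod beta /\ Cmod beta > 0) :
  exists N : nat, (N > 0)%nat /\ useq r theta delta N >= useq r theta delta (N + 1).
Proof.
  destruct Hroots as [al [[x y] [Hqa [Hqb [Hy [Hal _]]]]]].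
  simpl in Hy.
  pose proof (f_equal fst Hqb) as H1. pose proof (f_equal snd Hqb) as H2.
  unfold qC, Cplus, Cminus, Cmult, Copp, RtoC in H1, H2; simpl in H1, H2.
  assert (Hneg : al < -1).
  { destruct (Rle_or_lt al (-1)) as [h|h].
    - destruct (Req_dec al (-1)) as [e|e]; [|lra].
      subst al. unfold qR in Hqa. lra.
    - exfalso. assert (al > 1).
      { unfold Rabs in Hal. destruct (Rcase_abs al); lra. }
      pose proof (q_pos_ge1 r theta al Hr Htheta ltac:(lra)). lra. }
  set (e := r - 2*theta + al*theta).
  set (F1 := al*theta*(x*x-y*y) + al*e*x - 1).
  set (F2 := al*y*(2*theta*x+e)).
  unfold qR in Hqa.
  assert (I1 : (x-al)*F1 - y*F2 = 0).
  { assert (E : al * (1 + - ((r - theta) * x - 0 * y) +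
    ((r - 2 * theta) * (x * x - y * y) - 0 * (x * y + y * x)) +
    (theta * ((x * x - y * y) * x - (x * y + y * x) * y) -
     0 * ((x * x - y * y) * y + (x * y + y * x) * x))) = (x-al)*F1 - y*F2 +
     x * (1 - (r - theta) * al + (r - 2 * theta) * al ^ 2 + theta * al ^ 3)).
    { unfold F1, F2, e. ring. }
    rewrite H1, Hqa in E. lra. }
  assert (I2 : y*F1 + (x-al)*F2 = 0).
  { assert (E : al * (0 + - ((r - theta) * y + 0 * x) +
    ((r - 2 * theta) * (x * y + y * x) + 0 * (x * x - y * y)) +
    (theta * ((x * x - y * y) * y + (x * y + y * x) * x) +
     0 * ((x * x - y * y) * x - (x * y + y * x) * y))) = y*F1 + (x-al)*F2 +
     y * (1 - (r - theta) * al + (r - 2 * theta) * al ^ 2 + theta * al ^ 3)).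
    { unfold F1, F2, e. ring. }
    rewrite H2, Hqa in E. lra. }
  assert (Hy2 : y*y > 0) by (assert (y <> 0) by exact Hy; nra).
  assert (HF1 : F1 = 0).
  { assert (((x-al)*(x-al) + y*y) * F1 = 0).
    { replace (((x-al)*(x-al) + y*y) * F1) with ((x-al)*((x-al)*F1 - y*F2) + y*(y*F1 + (x-al)*F2)) by ring.
      rewrite I1, I2. ring. }
    apply Rmult_integral in H. destruct H; [exfalso; pose proof (Rle_0_sqr (x-al)); unfold Rsqr in *; lra|auto]. }
  assert (HF2 : F2 = 0).
  { assert (((x-al)*(x-al) + y*y) * F2 = 0).
    { replace (((x-al)*(x-al) + y*y) * F2) with ((x-al)*(y*F1 + (x-al)*F2) - y*((x-al)*F1 - y*F2)) by ring.
      rewrite I1, I2. ring. }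
    apply Rmult_integral in H. destruct H; [exfalso; pose proof (Rle_0_sqr (x-al)); unfold Rsqr in *; lra|auto]. }
  assert (He : 2*theta*x + e = 0).
  { unfold F2 in HF2. apply Rmult_integral in HF2. destruct HF2 as [h|h]; auto.
    apply Rmult_integral in h. destruct h; [lra|]. exfalso; apply Hy; auto. }
  assert (Hdisc : 4 * (-theta*al) - (al*e)*(al*e) > 0).
  { assert (ee : e = -2*theta*x) by lra.
    unfold F1 in HF1. rewrite ee in HF1 |- *.
    assert (1 + al*theta*x*x = - al*theta*y*y) by nra.
    assert (E : 4 * (-theta*al) - (al*(-2*theta*x))*(al*(-2*theta*x)) = -4*theta*al*(1 + al*theta*x*x)) by ring.
    rewrite E. rewrite H. assert (al*al > 0) by nra. assert (theta*theta > 0) by nra.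
    replace (-4 * theta * al * (- al * theta * y * y)) with (4*(al*al)*(theta*theta)*(y*y)) by ring.
    apply Rmult_gt_0_compat; [apply Rmult_gt_0_compat; [apply Rmult_gt_0_compat|]|]; lra. }
  destruct (Classical_Prop.classic (exists N : nat, (N > 0)%nat /\ useq r theta delta N >= useq r theta delta (N + 1))) as [h|h]; [exact h|exfalso].
  set (u := useq r theta delta).
  assert (Hinc : forall n, u (S (S n)) - u (S n) > 0).
  { intro n. destruct (Rlt_or_le (u (S n)) (u (S (S n)))) as [l|l]; [lra|].
    exfalso; apply h. exists (S n). split; [lia|].
    replace (S n + 1)%nat with (S (S n)) by lia. fold u. lra. }
  set (w := fun n => u (S (S n)) - u (S n)).
  assert (Hw : forall n, w (S (S (S n))) = (r-theta)*w (S (S n)) - (r-2*theta)*w (S n) - theta * w n).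
  { intro n. unfold w, u. rewrite (us r theta delta (S (S n))), (us r theta delta (S n)). ring. }
  set (z := fun n => w n - al * w (S n)).
  apply (no_pos2 z (al*e) (-theta*al) Hdisc).
  - intro n. unfold z. pose proof (Hinc n). pose proof (Hinc (S n)). fold (w n) in *.
    unfold w in *. nra.
  - intro n. unfold z. rewrite Hw.
    assert (Hq' : 1 - (r - theta) * al + (r - 2 * theta) * al ^ 2 + theta * al ^ 3 = 0) by exact Hqa.
    match goal with |- ?L = ?R => assert (E : L - R = w (S (S n)) *
      (1 - (r - theta) * al + (r - 2 * theta) * al ^ 2 + theta * al ^ 3)) by (unfold e; ring) end.
    rewrite Hq' in E. lra.
Qed.
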